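(* Let $P$ be an $L$-dcpo and $x\in P$. If there exists a directed $L$-subset $D\in L^P$ such that $D\le k(x)$ and $\sqcup D=x$, then $k(x)$ is directed and $x=\sqcup k(x)$.
   Context: $L$ is a frame with implication $\to$. $L$-order $e$ on $P$: $e(x,x)=1$, $e(x,y)\wedge e(y,z)\le e(x,z)$, $e(x,y)\wedge e(y,x)=1\Rightarrow x=y$. ${\rm sub}_P(A,B)=\bigwedge_xA(x)\to B(x)$; ${\downarrow}y(x)=e(x,y)$; $\sqcup A=x$ iff $e(x,y)={\rm sub}_P(A,{\downarrow}y)$ for all $y$. Directed: $\bigvee_xD(x)=1$ and $D(x)\wedge D(y)\le\bigvee_zD(z)\wedge e(x,z)\wedge e(y,z)$; ideal: directed lower set ($I(x)\wedge e(y,x)\le I(y)$); $L$-dcpo: every directed $L$-subset has a supremum. ${\Downarrow}x(y)=\bigwedge\{e(x,\sqcup I)\to I(y):I\text{ ideal of }P\}$. $K(P)=\{x:{\Downarrow}x(x)=1\}$; $k(x)\in L^P$ is $k(x)(y)=e(y,x)$ for $y\in K(P)$ and $0$ otherwise. $D\le k(x)$ is pointwise. *)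

(* Defs.v *)
From Stdlib Require Import ClassicalEpsilon.

(* A frame with implication: a complete lattice (arbitrary joins of subsets),
   binary meets, and an implication right adjoint to meet (hence meets
   distribute over arbitrary joins). *)
Record frame := Frame {
  fcar :> Type;
  fle : fcar -> fcar -> Prop;
  fle_refl : forall a, fle a a;
  fle_trans : forall a b c, fle a b -> fle b c -> fle a c;
  fle_antisym : forall a b, fle a b -> fle b a -> a = b;
  fsup : (fcar -> Prop) -> fcar;
  fsup_ub : forall (S : fcar -> Prop) a, S a -> fle a (fsup S);
  fsup_least : forall (S : fcar -> Prop) u, (forall a, S a -> fle a u) -> fle (fsup S) u;
  fmeet : fcar -> fcar -> fcar;
  fmeet_lb1 : forall a b, fle (fmeet a b) a;
  fmeet_lb2 : forall a b, fle (fmeet a b) b;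
  fmeet_glb : forall a b c, fle c a -> fle c b -> fle c (fmeet a b);
  fimp : fcar -> fcar -> fcar;
  fimp_adj : forall a b c, fle (fmeet a b) c <-> fle a (fimp b c)
}.

Arguments fle {f}.
Arguments fsup {f}.
Arguments fmeet {f}.
Arguments fimp {f}.

Section FrameOps.
Context {L : frame}.
Definition bigsup {I : Type} (F : I -> L) : L := fsup (fun a => exists i, a = F i).
Definition biginf {I : Type} (F : I -> L) : L :=
  fsup (fun c => forall i, fle c (F i)).
Definition ftop : L := fsup (fun _ => True).
Definition fbot : L := fsup (fun _ => False).
End FrameOps.

Section LOrder.
Context {L : frame} {P : Type} (e : P -> P -> L).

Definition is_Lorder : Prop :=
  (forall x, e x x = ftop) /\
  (forall x y z, fle (fmeet (e x y) (e y z)) (e x z)) /\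
  (forall x y, fmeet (e x y) (e y x) = ftop -> x = y).

Definition subP (A B : P -> L) : L := biginf (fun x => fimp (A x) (B x)).

Definition down (y : P) : P -> L := fun x => e x y.

Definition is_sup (A : P -> L) (x : P) : Prop :=
  forall y, e x y = subP A (down y).

Definition directed (D : P -> L) : Prop :=
  bigsup D = ftop /\
  (forall x y, fle (fmeet (D x) (D y))
                   (bigsup (fun z => fmeet (D z) (fmeet (e x z) (e y z))))).

Definition lower_set (I : P -> L) : Prop :=
  forall x y, fle (fmeet (I x) (e y x)) (I y).

Definition ideal (I : P -> L) : Prop := directed I /\ lower_set I.

Definition Ldcpo : Prop := forall D, directed D -> exists x, is_sup D x.

(* Way-below: Wb x y = /\ { e(x, sup I) -> I(y) : I ideal }.  The meet is
   indexed by pairs (I, s) with I an ideal and s = sup I (sups are unique). *)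
Definition wayb (x y : P) : L :=
  biginf (fun p : {Is : (P -> L) * P | ideal (fst Is) /\ is_sup (fst Is) (snd Is)} =>
            fimp (e x (snd (proj1_sig p))) (fst (proj1_sig p) y)).

Definition compact (x : P) : Prop := wayb x x = ftop.

Definition kset (x : P) : P -> L := fun y =>
  if excluded_middle_informative (compact y) then e y x else fbot.

End LOrder.

(* Main.v *)
Require Import Defs.
From Stdlib Require Import Classical ClassicalEpsilon.

Section Aux.
Variable L : frame.

Ltac proj := solve [ apply fle_refl
  | eapply fle_trans; [apply fmeet_lb1 | proj]
  | eapply fle_trans; [apply fmeet_lb2 | proj] ].

Lemma meet_comm_le (a b : L) : fle (fmeet a b) (fmeet b a).
Proof. apply fmeet_glb; proj. Qed.

Lemma meet_mono (a a' b b' : L) : fle a a' -> fle b b' -> fle (fmeet a b) (fmeet a' b').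
Proof. intros H1 H2. apply fmeet_glb; eapply fle_trans; [apply fmeet_lb1| exact H1 | apply fmeet_lb2 | exact H2]. Qed.

Lemma meet_sup_l {I : Type} (F : I -> L) b u :
  (forall i, fle (fmeet (F i) b) u) -> fle (fmeet (bigsup F) b) u.
Proof. intros H. apply (fimp_adj L). apply fsup_least. intros a [i ->].
  apply (fimp_adj L). apply H. Qed.

Lemma meet_sup_r {I : Type} (F : I -> L) a u :
  (forall i, fle (fmeet a (F i)) u) -> fle (fmeet a (bigsup F)) u.
Proof. intros H. eapply fle_trans; [apply meet_comm_le|]. apply meet_sup_l.
  intro i. eapply fle_trans; [apply meet_comm_le|]. apply H. Qed.

Lemma bigsup_ub {I : Type} (F : I -> L) i : fle (F i) (bigsup F).
Proof. apply fsup_ub. exists i. reflexivity. Qed.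

Lemma bigsup_least {I : Type} (F : I -> L) u : (forall i, fle (F i) u) -> fle (bigsup F) u.
Proof. intros H. apply fsup_least. intros a [i ->]. apply H. Qed.

Lemma biginf_lb {I : Type} (F : I -> L) i : fle (biginf F) (F i).
Proof. unfold biginf. apply fsup_least. intros c Hc. apply Hc. Qed.

Lemma biginf_glb {I : Type} (F : I -> L) c : (forall i, fle c (F i)) -> fle c (biginf F).
Proof. intros H. unfold biginf. apply (fsup_ub L _ c H). Qed.

Lemma top_max (a : L) : fle a ftop.
Proof. unfold ftop. apply (fsup_ub L _ a I). Qed.

Lemma bot_min (a : L) : fle fbot a.
Proof. unfold fbot. apply fsup_least. intros c []. Qed.

Lemma fimp_anti (b b' c : L) : fle b' b -> fle (fimp b c) (fimp b' c).
Proof. intros H. apply (fimp_adj L). eapply fle_trans; [apply meet_mono; [apply fle_refl|exact H]|].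
  apply (fimp_adj L). apply fle_refl. Qed.

Variable P : Type.
Variable e : P -> P -> L.
Hypothesis He : is_Lorder e.

Lemma etr a b c : fle (fmeet (e a b) (e b c)) (e a c).
Proof. apply (proj1 (proj2 He)). Qed.

Lemma kset_le x y : fle (kset e x y) (e y x).
Proof. unfold kset. destruct excluded_middle_informative; [apply fle_refl|apply bot_min]. Qed.

Lemma kset_c x y : compact e y -> kset e x y = e y x.
Proof. unfold kset. destruct excluded_middle_informative; tauto. Qed.

Lemma kset_nc x y : ~ compact e y -> kset e x y = fbot.
Proof. unfold kset. destruct excluded_middle_informative; tauto. Qed.

Lemma sup_mono (A B : P -> L) x : (forall y, fle (A y) (B y)) -> is_sup e A x ->
  (forall y z, fle (fmeet (e x y) (B z)) (e z y)) -> is_sup e B x.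
Proof. intros HAB HA Hb y. apply fle_antisym.
  - apply biginf_glb. intro z. apply (fimp_adj L). apply Hb.
  - rewrite (HA y). apply biginf_glb. intro z. eapply fle_trans; [apply (biginf_lb _ z)|].
    apply fimp_anti. apply HAB.
Qed.

Variable D : P -> L.
Hypothesis HD : directed e D.

Definition Id (y : P) : L := bigsup (fun z => fmeet (D z) (e y z)).

Lemma D_le_I y : fle (D y) (Id y).
Proof. eapply fle_trans; [|apply (bigsup_ub _ y)]. apply fmeet_glb; [apply fle_refl|].
  rewrite (proj1 He). apply top_max. Qed.

Lemma key a b : fle (fmeet (Id a) (Id b)) (bigsup (fun u => fmeet (D u) (fmeet (e a u) (e b u)))).
Proof.
  apply meet_sup_l. intro z. apply meet_sup_r. intro w.
  eapply fle_trans with (fmeet (fmeet (D z) (D w)) (fmeet (e a z) (e b w))).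
  { apply fmeet_glb; apply fmeet_glb; proj. }
  eapply fle_trans; [apply meet_mono; [apply (proj2 HD)|apply fle_refl]|].
  apply meet_sup_l. intro v. eapply fle_trans; [|apply (bigsup_ub _ v)].
  apply fmeet_glb; [proj|]. apply fmeet_glb.
  - eapply fle_trans; [|apply (etr a z v)]. apply fmeet_glb; proj.
  - eapply fle_trans; [|apply (etr b w v)]. apply fmeet_glb; proj.
Qed.

Variable x : P.
Hypothesis HDx : is_sup e D x.

Lemma Id_ideal : ideal e Id.
Proof. split; [split|].
  - apply fle_antisym; [apply top_max|]. rewrite <- (proj1 HD).
    apply bigsup_least. intro i. eapply fle_trans; [apply D_le_I|]. apply (bigsup_ub Id).
  - intros a b. eapply fle_trans; [apply key|]. apply bigsup_least. intro u.
    eapply fle_trans; [|apply (bigsup_ub _ u)]. apply meet_mono; [apply D_le_I|apply fle_refl].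
  - intros y z. apply meet_sup_l. intro w. eapply fle_trans; [|apply (bigsup_ub _ w)].
    apply fmeet_glb; [proj|]. eapply fle_trans; [|apply (etr z y w)]. apply fmeet_glb; proj.
Qed.

Lemma Id_sup : is_sup e Id x.
Proof. apply (sup_mono D); [apply D_le_I|exact HDx|].
  intros y z. apply meet_sup_r. intro w.
  assert (Hw : fle (fmeet (e x y) (D w)) (e w y)).
  { apply (fimp_adj L). rewrite (HDx y). apply (biginf_lb (fun z => fimp (D z) (down e y z)) w). }
  eapply fle_trans; [|apply (etr z w y)]. apply fmeet_glb; [proj|].
  eapply fle_trans; [|exact Hw]. apply fmeet_glb; proj.
Qed.

Lemma compact_le a : compact e a -> fle (e a x) (Id a).
Proof. intros Hc.
  pose (p := exist (fun Is : (P -> L) * P => ideal e (fst Is) /\ is_sup e (fst Is) (snd Is))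
               (Id, x) (conj Id_ideal Id_sup)).
  assert (H := biginf_lb (fun p : {Is : (P -> L) * P | ideal e (fst Is) /\ is_sup e (fst Is) (snd Is)} =>
            fimp (e a (snd (proj1_sig p))) (fst (proj1_sig p) a)) p).
  change (fle (wayb e a a) (fimp (e a x) (Id a))) in H.
  rewrite Hc in H. apply (fimp_adj L) in H.
  eapply fle_trans; [|exact H]. apply fmeet_glb; [apply top_max|apply fle_refl].
Qed.

End Aux.

Theorem lemma5p8 (L : frame) (P : Type) (e : P -> P -> L)
  (He : is_Lorder e) (Hdcpo : Ldcpo e) (x : P) :
  (exists D : P -> L, directed e D /\ (forall y, fle (D y) (kset e x y)) /\ is_sup e D x) ->
  directed e (kset e x) /\ is_sup e (kset e x) x.
Proof.
  intros [D [HD [HDk HDx]]]. split; [split|].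
  - apply fle_antisym; [apply top_max|]. rewrite <- (proj1 HD).
    apply bigsup_least. intro i. eapply fle_trans; [apply HDk|]. apply (bigsup_ub _ (kset e x)).
  - intros a b.
    destruct (classic (compact e a)) as [Ha|Ha]; [|rewrite (kset_nc L P e x a Ha);
      eapply fle_trans; [apply fmeet_lb1|apply bot_min]].
    destruct (classic (compact e b)) as [Hb|Hb]; [|rewrite (kset_nc L P e x b Hb);
      eapply fle_trans; [apply fmeet_lb2|apply bot_min]].
    rewrite (kset_c L P e x a Ha), (kset_c L P e x b Hb).
    eapply fle_trans; [apply meet_mono; apply (compact_le L P e He D HD x HDx); assumption|].
    eapply fle_trans; [apply (key L P e He D HD)|]. apply bigsup_least. intro u.
    eapply fle_trans; [|apply (bigsup_ub _ _ u)]. apply meet_mono; [apply HDk|apply fle_refl].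
  - apply (sup_mono L P e D); [exact HDk|exact HDx|].
    intros y z. eapply fle_trans; [|apply (etr L P e He z x y)].
    apply fmeet_glb; [|apply fmeet_lb1]. eapply fle_trans; [apply fmeet_lb2|]. apply kset_le.
Qed.
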